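(* Consider the diploid population model of the context with environment (A), and suppose one of the following holds: (a) $0<\alpha<1$, $\zeta(N)^{3-\alpha}/N^2\to0$ and $\limsup_{N\to\infty}\varepsilon_N/c_N<\infty$; (b) $1\le\alpha<2$, $\zeta(N)/N\to0$ and $\varepsilon_N=cN^{\alpha-2}(\mathbf 1\{\kappa>2\}+\mathbf 1\{\kappa=2\}\log N)$ for a fixed $c>0$. Then $$\limsup_{N\to\infty}\frac{N}{c_N}\,\mathbb E\Big[\frac{X_1(X_1-1)(X_1-2)}{S_N^3}\mathbf 1\{S_N\ge2N\}\Big]=0.$$
   Context: Population of $2N$ diploid individuals; each generation they form $N$ uniformly random parent pairs, pair $i$ produces $X_i$ diploid potential offspring (one gene copy from each parent, chosen uniformly from that parent's two copies), $S_N=X_1+\dots+X_N$; if $S_N\ge2N$, $2N$ potential offspring are sampled uniformly without replacement to survive, otherwise the population is unchanged; generations are independent. Environment (A): fix $0<\alpha<2\le\kappa$; with probability $\varepsilon_N\in(0,1)$ all $X_i$ are i.i.d. with law $\mathbb L(\alpha,\zeta(N))$, otherwise i.i.d. with law $\mathbb L(\kappa,\zeta(N))$. Here $X\vartriangleright\mathbb L(a,\zeta(N))$ means $\mathbb P(X\le\zeta(N))=1$, remaining mass outside $\{2,\dots,\zeta(N)\}$ on $\{0,1\}$, and $g_a(k)(k^{-a}-(1+k)^{-a})\le\mathbb P(X=k)\le f_a(k)(k^{-a}-(1+k)^{-a})$ for $2\le k\le\zeta(N)$, with $g_a\le f_a$ bounded positive functions, $\inf_k\sup_{i\ge k}f_a(i)<\infty$,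 $\sup_k\inf_{i\ge k}g_a(i)>0$, limits $\lim_kf_a(k),\lim_kg_a(k)$ existing and positive; $\mathbb E[X]>2$ is assumed. $c_N=\mathbb E[\nu_1(\nu_1-1)]/(8(2N-1))$ where $\nu_1$ is the number of surviving offspring of pair 1 (the probability that two gene copies in distinct individuals derive from the same parental gene copy). *)

(* Defs.v *)
From HB Require Import structures.
From mathcomp Require Import all_boot all_order all_algebra.
From mathcomp Require Import all_classical all_reals all_analysis.

Set Implicit Arguments.
Unset Strict Implicit.
Unset Printing Implicit Defensive.

Import Order.TTheory GRing.Theory Num.Theory.
Import numFieldNormedType.Exports.
Local Open Scope classical_set_scope.
Local Open Scope ring_scope.

(* A configuration of offspring numbers (X_1,...,X_N) with values in
   {0,...,z} (z = zeta(N)); the laws are supported on {0..z}. *)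

Definition Xi (N z : nat) (t : N.-tuple 'I_z.+1) (i : nat) : nat :=
  nth 0%N (map (@nat_of_ord z.+1) t) i.

Definition X1 (N z : nat) (t : N.-tuple 'I_z.+1) : nat := Xi t 0.

Definition SN (N z : nat) (t : N.-tuple 'I_z.+1) : nat :=
  (\sum_(x <- t) nat_of_ord x)%N.

Definition iid_weight {R : realType} (N z : nat) (p : nat -> R)
  (t : N.-tuple 'I_z.+1) : R :=
  \prod_(x <- t) p (nat_of_ord x).

(* environment (A): with prob. eps all X_i iid ~ pa, otherwise iid ~ pk *)
Definition env_weight {R : realType} (N z : nat) (eps : R) (pa pk : nat -> R)
  (t : N.-tuple 'I_z.+1) : R :=
  eps * iid_weight pa t + (1 - eps) * iid_weight pk t.

Definition EA {R : realType} (N z : nat) (eps : R) (pa pk : nat -> R)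
  (F : N.-tuple 'I_z.+1 -> R) : R :=
  \sum_(t : N.-tuple 'I_z.+1) env_weight eps pa pk t * F t.

(* E[ nu_1 (nu_1 - 1) | X ] : given S_N >= 2N, 2N of the S_N potential
   offspring are sampled uniformly without replacement, so nu_1 is
   hypergeometric(S_N, X_1, 2N); if S_N < 2N the population is unchanged
   and no coalescence occurs (nu_1 contributes 0). *)
Definition nu1_fact2_cond {R : realType} (N z : nat) (t : N.-tuple 'I_z.+1) : R :=
  let S := SN t in let x := X1 t in
  if (2 * N <= S)%N then
    \sum_(j < x.+1 | (j <= 2 * N)%N)
      ((j * (j - 1))%N%:R * ('C(x, j) * 'C(S - x, 2 * N - j))%N%:R
        / ('C(S, 2 * N))%:R)
  else 0.

Definition cN {R : realType} (N z : nat) (eps : R) (pa pk : nat -> R) : R :=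
  @EA R N z eps pa pk (@nu1_fact2_cond R N z) / (8 * (2 * N%:R - 1)).

Definition E3 {R : realType} (N z : nat) (eps : R) (pa pk : nat -> R) : R :=
  @EA R N z eps pa pk (fun t =>
    if (2 * N <= SN t)%N then
      (X1 t * (X1 t - 1) * (X1 t - 2))%N%:R / (SN t)%:R ^+ 3
    else 0).

Definition fg_admissible {R : realType} (f g : nat -> R) : Prop :=
  (forall k, 0 < g k) /\ (forall k, g k <= f k) /\
  (exists M : R, forall k, f k <= M) /\
  (limn_esup (fun k => (f k)%:E) < +oo)%E /\
  (0 < limn_einf (fun k => (g k)%:E))%E /\
  (exists lf : R, 0 < lf /\ f @ \oo --> lf) /\
  (exists lg : R, 0 < lg /\ g @ \oo --> lg).

Definition law_L {R : realType} (a : R) (f g : nat -> R) (z : nat)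
  (p : nat -> R) : Prop :=
  [/\ (forall k, 0 <= p k),
      (forall k, (z < k)%N -> p k = 0),
      \sum_(k < z.+1) p k = 1,
      (forall k : nat, (2 <= k <= z)%N ->
         g k * (k%:R `^ (- a) - (k.+1)%:R `^ (- a)) <= p k /\
         p k <= f k * (k%:R `^ (- a) - (k.+1)%:R `^ (- a))) &
      2 < \sum_(k < z.+1) (k%:R * p k)].

(* Main.v *)
Require Import Defs.
From HB Require Import structures.
From mathcomp Require Import all_boot all_order all_algebra.
From mathcomp Require Import all_classical all_reals all_analysis.
From mathcomp Require Import zify ring lra.

Import Order.TTheory GRing.Theory Num.Theory.

Lemma ext0 (n m : nat) (G : nat -> nat) : n <= m ->
  (forall j, n <= j -> G j = 0) ->
  \sum_(0 <= j < n) G j = \sum_(0 <= j < m) G j.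
Proof.
move=> nm G0; rewrite (big_cat_nat (leq0n n) nm) /=.
rewrite [X in _ = _ + X]big_nat_cond [X in _ = _ + X]big1 ?addn0 //.
by move=> j /andP[/andP[Hj _] _]; rewrite G0.
Qed.

Lemma sum_ext_cond (a b : nat) (F : nat -> nat) :
  (forall j, a < j -> F j = 0) ->
  \sum_(j < a.+1 | j <= b) F j = \sum_(j < b.+1) F j.
Proof.
move=> F0.
rewrite big_mkcond /= -(big_mkord xpredT (fun j => if j <= b then F j else 0)).
rewrite -(big_mkord xpredT F).
rewrite (@ext0 a.+1 (a.+1 + b.+1)); last by move=> j hj; case: ifP => // _; rewrite F0.
  2: by rewrite leq_addr.
rewrite -(@ext0 b.+1 (a.+1 + b.+1) (fun j => if j <= b then F j else 0)).
- by apply: eq_big_nat => j /andP[_ Hj]; rewrite ltnS in Hj; rewrite Hj.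
- by rewrite leq_addl.
- by move=> j hj; case: ifP => // h; lia.
Qed.

Lemma bin_fact2 x i : (i.+2 * i.+1 * 'C(x, i.+2) = x * (x - 1) * 'C(x - 2, i))%N.
Proof.
have -> : (x - 2 = (x.-1).-1)%N by lia.
have -> : (x - 1 = x.-1)%N by lia.
rewrite (mulnC i.+2) -mulnA -mul_bin_diag mulnCA -mul_bin_diag.
by rewrite mulnA.
Qed.

Lemma comb_id (x S n : nat) : 2 <= n -> x <= S ->
  (\sum_(j < x.+1 | j <= n) (j * (j - 1) * ('C(x, j) * 'C(S - x, n - j))))%N
  = (x * (x - 1) * 'C(S - 2, n - 2))%N.
Proof.
move=> hn hx.
rewrite (@sum_ext_cond x n (fun j => j * (j - 1) * ('C(x, j) * 'C(S - x, n - j)))); last by move=> j hj; rewrite bin_small // mul0n muln0.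
case: n hn => [|[|n]] // _.
rewrite 2!big_ord_recl /= /bump /=.
rewrite mul0n add0n subnn muln0 mul0n add0n.
have h1 : forall i : nat, (1 + (1 + i) = i.+2)%N by lia.
have -> : (n.+2 - 2 = n)%N by lia.
under eq_bigr => i _ do rewrite h1 subn1 /= !subSS mulnA bin_fact2 -!mulnA.
rewrite -big_distrr -big_distrr /= -mulnA; congr (_ * _).
case: x hx => [|[|x]] hx; rewrite ?mul0n //.
congr (_ * _).
have -> : (x.+2 - 2 = x)%N by lia.
have -> : (S - 2 = x + (S - x.+2))%N by lia.
by rewrite -binomial.Vandermonde.
Qed.

Lemma binS2 (S n : nat) : 2 <= n -> n <= S ->
  (S * (S - 1) * 'C(S - 2, n - 2) = n * (n - 1) * 'C(S, n))%N.
Proof.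
move=> hn hS.
case: n hn hS => [|[|n]] // _ hS.
have -> : (n.+2 - 2 = n)%N by lia.
have -> : (n.+2 - 1 = n.+1)%N by lia.
have -> : (S - 2 = (S.-1).-1)%N by lia.
have -> : (S - 1 = S.-1)%N by lia.
by rewrite -mulnA mul_bin_diag mulnCA mul_bin_diag mulnA (mulnC n.+1).
Qed.

Import numFieldNormedType.Exports.
Local Open Scope classical_set_scope.
Local Open Scope ring_scope.

Lemma X1_le N z (t : N.-tuple 'I_z.+1) : (X1 t <= SN t)%N /\ (X1 t <= z)%N.
Proof.
rewrite /X1 /Xi /SN; case: t => [[|a s] hs] /=.
- by rewrite big_nil.
- rewrite big_cons; split; [exact: leq_addr | by have := ltn_ord a].
Qed.

Lemma nu_eq (R : realType) N z (t : N.-tuple 'I_z.+1) : (0 < N)%N -> (2 * N <= SN t)%N ->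
  @nu1_fact2_cond R N z t =
  (X1 t * (X1 t - 1) * ((2 * N) * (2 * N - 1)))%:R / (SN t * (SN t - 1))%:R.
Proof.
move=> N0 hS; rewrite /nu1_fact2_cond /= hS.
have [hx _] := @X1_le _ _ t.
move: hx hS; set x := X1 t; set S := SN t; move=> hx hS.
rewrite -mulr_suml.
under eq_bigr do rewrite -natrM.
rewrite -natr_sum comb_id //; last by lia.
have hn : (2 <= 2 * N)%N by lia.
have E := @binS2 _ _ hn hS.
have h1 : ('C(S, 2 * N))%:R != 0 :> R by rewrite pnatr_eq0 -lt0n bin_gt0.
have h2 : (S * (S - 1))%:R != 0 :> R by rewrite pnatr_eq0 muln_eq0 negb_or; apply/andP; split; apply/eqP; lia.
apply/eqP; rewrite eqr_div // -!natrM eqr_nat; apply/eqP.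
rewrite -(mulnA _ ('C(S - 2, 2 * N - 2))) (mulnC ('C(S - 2, 2 * N - 2))) E.
by rewrite !mulnA.
Qed.

Lemma nat_key (x z S n : nat) : (x <= z)%N -> (n <= S)%N ->
  (x * (x - 1) * (x - 2) * ((n * (n * (n - 1))) * (S * (S - 1))) <=
   z * (x * (x - 1) * (n * (n - 1))) * S ^ 3)%N.
Proof.
move=> hx hn.
have k : ((x - 2) * n * (S * (S - 1)) <= z * S * (S * S))%N.
  apply: leq_mul; first by apply: leq_mul => //; lia.
  by apply: leq_mul => //; lia.
have e1 : (x * (x - 1) * (x - 2) * ((n * (n * (n - 1))) * (S * (S - 1))) =
   (x * (x - 1) * (n * (n - 1))) * ((x - 2) * n * (S * (S - 1))))%N by ring.
have e2 : (z * (x * (x - 1) * (n * (n - 1))) * S ^ 3 =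
   (x * (x - 1) * (n * (n - 1))) * (z * S * (S * S)))%N by ring.
by rewrite e1 e2 leq_mul2l k orbT.
Qed.

Lemma pt_le (R : realType) N z (t : N.-tuple 'I_z.+1) : (0 < N)%N -> (2 * N <= SN t)%N ->
  (X1 t * (X1 t - 1) * (X1 t - 2))%:R / (SN t)%:R ^+ 3 <=
  (z%:R / ((2 * N) * ((2 * N) * (2 * N - 1)))%:R) * @nu1_fact2_cond R N z t.
Proof.
move=> N0 hS; rewrite nu_eq //.
have [hx hz] := @X1_le _ _ t.
move: hx hz hS; set x := X1 t; set S := SN t; move=> hx hz hS.
rewrite mulf_div -natrX -!natrM.
have p1 : (0 < (S ^ 3)%:R :> R) by rewrite ltr0n expn_gt0; apply/orP; left; lia.
have p2 : (0 < (2 * N * (2 * N * (2 * N - 1)) * (S * (S - 1)))%:R :> R).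
  by rewrite ltr0n !muln_gt0; apply/andP; split; [|apply/andP; split]; lia.
rewrite ler_pdivrMr // mulrAC ler_pdivlMr // -!natrM ler_nat.
exact: nat_key.
Qed.

Lemma u_bound (R : realType) N z (eps : R) (pa pk : nat -> R) :
  (0 < N)%N -> 0 <= eps <= 1 -> (forall k, 0 <= pa k) -> (forall k, 0 <= pk k) ->
  0 <= N%:R / cN N z eps pa pk * E3 N z eps pa pk <= 2 * z%:R / N%:R.
Proof.
move=> N0 /andP[e0 e1] pa0 pk0.
have w0 : forall t : N.-tuple 'I_z.+1, 0 <= env_weight eps pa pk t.
  move=> t; rewrite /env_weight /iid_weight.
  apply: addr_ge0; apply: mulr_ge0; rewrite ?subr_ge0 //; apply: prodr_ge0 => *; by [].
have nu0 : forall t : N.-tuple 'I_z.+1, 0 <= @nu1_fact2_cond R N z t.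
  move=> t; rewrite /nu1_fact2_cond /=; case: ifP => _ //.
  by apply: sumr_ge0 => j _; apply: divr_ge0; rewrite ?mulr_ge0 ?ler0n.
have EAnu0 : 0 <= @EA R N z eps pa pk (@nu1_fact2_cond R N z).
  by apply: sumr_ge0 => t _; apply: mulr_ge0.
have Nr : 1 <= N%:R :> R by rewrite ler1n.
have den : 0 < 8 * (2 * N%:R - 1) :> R by lra.
have cN0 : 0 <= cN N z eps pa pk by rewrite /cN divr_ge0 // ltW.
set K : R := z%:R / ((2 * N) * ((2 * N) * (2 * N - 1)))%:R.
have K0 : 0 <= K by rewrite /K divr_ge0 ?ler0n.
have E30 : 0 <= E3 N z eps pa pk.
  apply: sumr_ge0 => t _; apply: mulr_ge0 => //; case: ifP => _ //.
have E3le : E3 N z eps pa pk <= K * @EA R N z eps pa pk (@nu1_fact2_cond R N z).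
  rewrite /E3 /EA mulr_sumr; apply: ler_sum => t _; rewrite mulrCA.
  apply: ler_wpM2l => //; case: ifP => h; first exact: pt_le.
  exact: mulr_ge0.
have z0 : 0 <= 2 * z%:R / N%:R :> R by rewrite divr_ge0 ?mulr_ge0 ?ler0n.
apply/andP; split; first by rewrite mulr_ge0 // divr_ge0.
have [c0|c0] := eqVneq (cN N z eps pa pk) 0.
  by rewrite c0 invr0 mulr0 mul0r.
have cpos : 0 < cN N z eps pa pk by rewrite lt_neqAle eq_sym c0.
have EAe : @EA R N z eps pa pk (@nu1_fact2_cond R N z) = cN N z eps pa pk * (8 * (2 * N%:R - 1)).
  by rewrite /cN divfK // gt_eqF.
apply: (le_trans (ler_wpM2l _ E3le)); first by rewrite divr_ge0.
rewrite EAe /K natrM natrM natrM natrB; last by lia.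
have Nn : N%:R != 0 :> R by rewrite pnatr_eq0 -lt0n.
have h2 : 2 * N%:R - 1 != 0 :> R by rewrite gt_eqF //; lra.
rewrite le_eqVlt; apply/orP; left; apply/eqP.
rewrite natrM /=.
field.
by rewrite Nn c0 h2.
Qed.

Lemma zN_cvg_a (R : realType) (alpha : R) (zeta : nat -> nat) :
  alpha < 1 ->
  (fun N : nat => (zeta N)%:R `^ (3 - alpha) / (N%:R ^+ 2)) @ \oo --> (0 : R) ->
  (fun N : nat => (zeta N)%:R / N%:R) @ \oo --> (0 : R).
Proof.
move=> a1 hw.
have hv2 : (fun N : nat => ((zeta N)%:R / N%:R) ^+ 2) @ \oo --> (0 : R).
  apply: (@squeeze_cvgr _ _ _ _ (fun=> 0) (fun N : nat => (zeta N)%:R `^ (3 - alpha) / (N%:R ^+ 2))) => //; last exact: cvg_cst.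
  apply: nearW => N; rewrite sqr_ge0 /= expr_div_n.
  apply: ler_wpM2r; first by rewrite invr_ge0 exprn_ge0.
  case: (zeta N) => [|k]; first by rewrite expr0n /= powR_ge0.
  rewrite -powR_mulrn ?ler0n //; apply: ler_powR; first by rewrite ler1n.
  by lra.
have := continuous_cvg _ (@sqrt_continuous R 0) hv2.
have -> : (Num.sqrt \o (fun N : nat => ((zeta N)%:R / N%:R) ^+ 2)) = (fun N : nat => (zeta N)%:R / N%:R :> R).
  apply/funext => N /=.
  by rewrite sqrtr_sqr ger0_norm // divr_ge0 ?ler0n.
rewrite sqrtr0; apply; exact: filter_filter.
Qed.
Theorem lemma8 (R : realType) (alpha kappa : R)
  (f_a g_a f_k g_k : nat -> R) (zeta : nat -> nat) (eps : nat -> R)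
  (pa pk : nat -> nat -> R) :
  0 < alpha -> alpha < 2 -> 2 <= kappa ->
  fg_admissible f_a g_a -> fg_admissible f_k g_k ->
  (forall N, 0 < eps N < 1) ->
  (forall N, law_L alpha f_a g_a (zeta N) (pa N)) ->
  (forall N, law_L kappa f_k g_k (zeta N) (pk N)) ->
  ( (alpha < 1 /\
     (fun N : nat => (zeta N)%:R `^ (3 - alpha) / (N%:R ^+ 2)) @ \oo --> (0 : R) /\
     (limn_esup (fun N : nat =>
        (eps N / cN N (zeta N) (eps N) (pa N) (pk N))%:E) < +oo)%E)
    \/
    (1 <= alpha /\
     (fun N : nat => (zeta N)%:R / N%:R) @ \oo --> (0 : R) /\
     exists c : R, 0 < c /\
       \forall N \near \oo,
         eps N = c * N%:R `^ (alpha - 2) *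
           ((if 2 < kappa then 1 else 0) + (if kappa == 2 then ln N%:R else 0))) ) ->
  limn_esup (fun N : nat =>
    (N%:R / cN N (zeta N) (eps N) (pa N) (pk N)
       * E3 N (zeta N) (eps N) (pa N) (pk N))%:E) = 0%E.
Proof.
move=> a0 a2 k2 _ _ heps hla hlk hcase.
have hz : (fun N : nat => (zeta N)%:R / N%:R) @ \oo --> (0 : R).
  case: hcase => [[a1 [hw _]]|[_ [h _]]]; last exact: h.
  exact: zN_cvg_a a1 hw.
set u := fun N : nat => N%:R / cN N (zeta N) (eps N) (pa N) (pk N)
       * E3 N (zeta N) (eps N) (pa N) (pk N).
have hu : u @ \oo --> (0 : R).
  apply: (@squeeze_cvgr _ _ _ _ (fun=> 0) (fun N : nat => 2 * ((zeta N)%:R / N%:R))); last 2 first.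
  - exact: cvg_cst.
  - have := cvgM (cvg_cst (2 : R)) hz; rewrite mulr0; apply; exact: filter_filter.
  near=> N.
  have N0 : (0 < N)%N by near: N; exists 1%N.
  have [ha0 _ _ _ _] := hla N.
  have [hk0 _ _ _ _] := hlk N.
  have /andP[e0 e1] := heps N.
  rewrite mulrA; apply: u_bound => //.
  by rewrite (ltW e0) (ltW e1).
have hE : (fun N => (u N)%:E) @ \oo --> 0%E.
  by apply: cvg_EFin => //; apply: nearW.
by have [_ ->] := cvg_limn_einf_sup hE.
Unshelve. all: end_near.
Qed.
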